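(* Let $G$ be a group with subgroups $H,G_1,G_2$ such that $H\le G_1$ and $H\le G_2$, and suppose there is $t\in G$ with $t^{-1}G_1t=G_2$ and $t^{-1}ht=h$ for all $h\in H$. Then for each $k\ge 1$ the map $H_k(G_1,H)\to H_k(G,G_2)$ induced by the inclusion equals the composite $$H_k(G_1,H)\xrightarrow{\ \partial\ }H_{k-1}(H)\xrightarrow{(-1)^k(\,\_\,\times t)}H_k(G,G_2),$$ where $\partial$ is the connecting homomorphism and $\_\times t$ is induced by the chain map $C_{k-1}(H)\to C_k(G)$ sending a bar chain $(h_1,\dots,h_{k-1})$ to $$\sum_{j=0}^{k-1}(-1)^{k-1-j}\,(h_1,\dots,h_j,t,h_{j+1},\dots,h_{k-1}),$$ followed by the projection to relative homology.
   Context: Group homology is computed with integer coefficients via the bar construction: $C_k(G)$ is the free abelian group on $k$-tuples $(g_1,\dots,g_k)$ of elements of $G$ with the usual bar differential; relative homology $H_*(G,K)$ for $K\le G$ is the homology of $C_*(G)/C_*(K)$. *)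

(* Defs.v *)
From HB Require Import structures.
From mathcomp Require Import all_boot all_order all_algebra.
Set Implicit Arguments. Unset Strict Implicit. Unset Printing Implicit Defensive.
Import GRing.Theory Num.Theory.
Local Open Scope ring_scope.

Section BarComplex.
Variable G : groupType.

(* An integral chain of the bar complex: a finite formal Z-linear combination
   of tuples (g_1,...,g_n) of elements of G, given as a list of
   (coefficient, tuple) pairs.  Two lists represent the same element of the
   free abelian group iff all their coefficients agree ([ceq]). *)
Definition chain := seq (int * seq G).

Definition coef (c : chain) (sigma : seq G) : int :=
  \sum_(p <- c | p.2 == sigma) p.1.

Definition ceq (c d : chain) : Prop := forall sigma, coef c sigma = coef d sigma.

Definition cadd (c d : chain) : chain := c ++ d.
Definition cscale (a : int) (c : chain) : chain := [seq (a * p.1, p.2) | p <- c].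
Definition csub (c d : chain) : chain := cadd c (cscale (-1) d).

Definition of_degree (k : nat) (c : chain) : Prop :=
  forall sigma, coef c sigma != 0 -> size sigma = k.

Definition supported_in (K : {pred G}) (c : chain) : Prop :=
  forall sigma, coef c sigma != 0 -> all (mem K) sigma.

(* the bar differential of a basis element (g_1,...,g_n):
   (g_2,...,g_n) + sum_{i=1}^{n-1} (-1)^i (..., g_i g_{i+1}, ...)
   + (-1)^n (g_1,...,g_{n-1});  the differential of () is 0 *)
Definition bar_bd_tuple (s : seq G) : chain :=
  match s with
  | [::] => [::]
  | _ :: s' =>
    let n := size s in
    (1, s') ::
    [seq ((-1) ^+ i.+1, take i s ++ (nth 1%g s i * nth 1%g s i.+1)%g :: drop i.+2 s)
       | i <- iota 0 n.-1]
    ++ [:: ((-1) ^+ n, take n.-1 s)]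
  end.

Definition bar_bd (c : chain) : chain :=
  flatten [seq cscale p.1 (bar_bd_tuple p.2) | p <- c].

Definition cross_t_tuple (t : G) (s : seq G) : chain :=
  [seq ((-1) ^+ (size s - j), take j s ++ t :: drop j s) | j <- iota 0 (size s).+1].

Definition cross_t (t : G) (c : chain) : chain :=
  flatten [seq cscale p.1 (cross_t_tuple t p.2) | p <- c].

Definition rel_cycle (K A : {pred G}) (k : nat) (z : chain) : Prop :=
  [/\ of_degree k z, supported_in K z & supported_in A (bar_bd z)].

Definition rel_homologous (K A : {pred G}) (k : nat) (z1 z2 : chain) : Prop :=
  exists w u, [/\ of_degree k.+1 w, supported_in K w, of_degree k u,
                  supported_in A u & ceq (csub z1 z2) (cadd (bar_bd w) u)].

(* the connecting homomorphism H_k(K,A) -> H_{k-1}(A) on representatives: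
   lift the relative cycle to z in C_k(K) and take its boundary *)
Definition connecting (z : chain) : chain := bar_bd z.

End BarComplex.

(* Main.v *)
Require Import Defs.
From HB Require Import structures.
From mathcomp Require Import all_boot all_order all_algebra.
From mathcomp Require Import zify ring.
Import GRing.Theory Num.Theory.
Local Open Scope ring_scope.
Set Implicit Arguments. Unset Strict Implicit. Unset Printing Implicit Defensive.


Section Chains.
Variable G : groupType.
Implicit Types c d : chain G.

Definition W c (Phi : seq G -> int) : int := \sum_(p <- c) p.1 * Phi p.2.
Definition dl (s tau : seq G) : int := if tau == s then 1 else 0.

Lemma coefW c s : coef c s = W c (dl s).
Proof.
rewrite /coef /W big_mkcond /=; apply: eq_bigr => p _; rewrite /dl.
by case: eqP => _; rewrite ?mulr1 ?mulr0.
Qed.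

Lemma W_cat c d Phi : W (c ++ d) Phi = W c Phi + W d Phi.
Proof. by rewrite /W big_cat. Qed.
Lemma W_cons p c Phi : W (p :: c) Phi = p.1 * Phi p.2 + W c Phi.
Proof. by rewrite /W big_cons. Qed.
Lemma W_nil Phi : W [::] Phi = 0.
Proof. by rewrite /W big_nil. Qed.
Lemma W_scale a c Phi : W (cscale a c) Phi = a * W c Phi.
Proof. by rewrite /W big_map mulr_sumr; apply: eq_bigr => p _ /=; rewrite mulrA. Qed.

Definition lin (F : seq G -> chain G) c := flatten [seq cscale p.1 (F p.2) | p <- c].

Lemma W_lin F c Phi : W (lin F c) Phi = W c (fun tau => W (F tau) Phi).
Proof.
elim: c => [|p c IH]; first by rewrite /lin /= !W_nil.
by rewrite /lin /= W_cat W_scale -/(lin F c) IH W_cons.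
Qed.

Lemma W_linear c Phi1 Phi2 a :
  W c (fun tau => a * Phi1 tau + Phi2 tau) = a * W c Phi1 + W c Phi2.
Proof.
rewrite /W mulr_sumr -big_split /=; apply: eq_bigr => p _.
by rewrite mulrDr mulrA mulrCA mulrA.
Qed.

Lemma W_ext c Phi1 Phi2 : Phi1 =1 Phi2 -> W c Phi1 = W c Phi2.
Proof. by move=> E; apply: eq_bigr => p _; rewrite E. Qed.

Lemma coef_cons p c s :
  coef (p :: c) s = (if p.2 == s then p.1 else 0) + coef c s.
Proof. by rewrite /coef big_cons; case: ifP; rewrite ?add0r. Qed.

Lemma coef_notin c s : s \notin map snd c -> coef c s = 0.
Proof.
move=> Hs; rewrite /coef big1_seq // => p /andP[/eqP E Hp].
by case/negP: Hs; rewrite -E; apply: map_f.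
Qed.

Lemma W_group c Phi :
  W c Phi = \sum_(tau <- undup (map snd c)) coef c tau * Phi tau.
Proof.
elim: c => [|p c IH]; first by rewrite W_nil big_nil.
rewrite W_cons IH /=.
have E : \sum_(tau <- undup (map snd c))
           coef (p :: c) tau * Phi tau =
         (if p.2 \in undup (map snd c) then p.1 * Phi p.2 else 0) +
         \sum_(tau <- undup (map snd c)) coef c tau * Phi tau.
  under eq_bigr do rewrite coef_cons mulrDl.
  rewrite big_split /=; congr (_ + _).
  case: ifP => Hin.
    rewrite (bigD1_seq p.2) //= ?undup_uniq // eqxx big1 ?addr0 // => tau.
    by rewrite eq_sym => /negbTE ->; rewrite mul0r.
  rewrite big1_seq // => tau /andP[_ Htau].
  case: eqP => [E|]; last by rewrite mul0r.
  by rewrite E Htau in Hin.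
case: ifP => Hin.
  by rewrite E mem_undup Hin.
rewrite big_cons E mem_undup Hin add0r coef_cons eqxx.
by rewrite coef_notin ?Hin // addr0.
Qed.

Lemma W_supp c Phi1 Phi2 :
  (forall tau, coef c tau != 0 -> Phi1 tau = Phi2 tau) -> W c Phi1 = W c Phi2.
Proof.
move=> H; rewrite !W_group; apply: eq_bigr => tau _.
by case: (eqVneq (coef c tau) 0) => [->|/H ->]; rewrite ?mul0r.
Qed.

Lemma W_zero c Phi : (forall tau, coef c tau != 0 -> Phi tau = 0) -> W c Phi = 0.
Proof.
move=> H; rewrite (@W_supp c Phi (fun _ => 0)) // /W big1 // => p _; by rewrite mulr0.
Qed.

End Chains.


Section Tuples.
Variable G : groupType.
Variable t : G.

Definition cj (x : G) : G := (x ^ t)%g.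

Definition ins (j : nat) (s : seq G) : seq G :=
  mkseq (fun k => if (k < j)%N then nth 1%g s k else if k == j then t
                  else cj (nth 1%g s k.-1)) (size s).+1.

Definition F (i : nat) (l : seq G) : seq G :=
  mkseq (fun k => if i == 0%N then nth 1%g l k.+1 else
                  if (i < size l)%N then
                    (if (k < i.-1)%N then nth 1%g l k else
                     if k == i.-1 then (nth 1%g l k * nth 1%g l k.+1)%g
                     else nth 1%g l k.+1)
                  else nth 1%g l k) (size l).-1.

Lemma nthmk (f : nat -> G) n k :
  nth 1%g (mkseq f n) k = if (k < n)%N then f k else 1%g.
Proof.
case: ifP => H; first by rewrite nth_mkseq.
by rewrite nth_default // size_mkseq leqNgt H.
Qed.

Ltac crush :=
  repeat (rewrite ?size_mkseq ?nthmk /=);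
  repeat (case: ifP => ?); try lia.

Ltac fin := try done; try (by congr (cj (nth _ _ _)); lia);
  try (by congr (nth _ _ _); lia); try (by congr (nth _ _ _ * nth _ _ _)%g; lia).

Lemma R1 s i j : (i < j)%N -> (j <= size s)%N -> F i (ins j s) = ins j.-1 (F i s).
Proof.
move=> Hij Hj.
apply: (@eq_from_nth _ 1%g); rewrite /F /ins; first by crush.
rewrite !size_mkseq => k Hk.
crush; fin.
Qed.

Lemma R2 s i j : (j.+2 <= i)%N -> (i <= (size s).+1)%N ->
  F i (ins j s) = ins j (F i.-1 s).
Proof.
move=> Hij Hj.
apply: (@eq_from_nth _ 1%g); rewrite /F /ins; first by crush.
rewrite !size_mkseq => k Hk.
crush; fin.
by rewrite /cj -conjMg; congr ((_ * nth _ _ _) ^ _)%g; lia.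
Qed.

Lemma R3 s j : (j < size s)%N -> F j.+1 (ins j s) = F j.+1 (ins j.+1 s).
Proof.
move=> Hj.
apply: (@eq_from_nth _ 1%g); rewrite /F /ins; first by crush.
rewrite !size_mkseq => k Hk.
crush; fin.
by rewrite /cj -conjgC.
Qed.

Lemma R4a s : F 0 (ins 0 s) = map cj s.
Proof.
apply: (@eq_from_nth _ 1%g); rewrite /F /ins; first by crush; rewrite size_map.
rewrite !size_mkseq => k Hk.
crush; fin.
all: rewrite (nth_map 1%g) //; lia.
Qed.

Lemma R4b s : F (size s).+1 (ins (size s) s) = s.
Proof.
apply: (@eq_from_nth _ 1%g); rewrite /F /ins; first by crush.
rewrite !size_mkseq => k Hk.
crush; fin.
Qed.

Lemma size_ins j s : size (ins j s) = (size s).+1.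
Proof. by rewrite size_mkseq. Qed.
Lemma size_F i l : size (F i l) = (size l).-1.
Proof. by rewrite size_mkseq. Qed.

Lemma nthcons (x : G) l n : nth 1%g (x :: l) n = if n == 0%N then x else nth 1%g l n.-1.
Proof. by case: n. Qed.

Lemma nthtk (l : seq G) m n : nth 1%g (take m l) n = if (n < m)%N then nth 1%g l n else 1%g.
Proof.
case: ifP => H; first by rewrite nth_take.
rewrite nth_default // size_take; case: ifP => ?; lia.
Qed.

Lemma size_tk (l : seq G) m : size (take m l) = minn m (size l).
Proof. rewrite size_take; case: ifP => ?; lia. Qed.

Ltac crush2 :=
  repeat (rewrite ?size_mkseq ?nthmk ?nth_cat ?size_tk ?size_drop ?nth_drop
     ?nthcons ?nthtk ?size_map ?size_cat /=);
  repeat (let H := fresh "H" in case: ifP => H); try lia.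

Lemma F0 g l : F 0 (g :: l) = l.
Proof.
apply: (@eq_from_nth _ 1%g); rewrite /F; first by crush2.
rewrite !size_mkseq => k /= Hk; crush2; fin.
Qed.

Lemma FS i l : (i.+1 < size l)%N ->
  F i.+1 l = take i l ++ (nth 1%g l i * nth 1%g l i.+1)%g :: drop i.+2 l.
Proof.
move=> Hi.
apply: (@eq_from_nth _ 1%g); rewrite /F; first by crush2.
rewrite !size_mkseq => k /= Hk; crush2; fin.
Qed.

Lemma Flast l : (0 < size l)%N -> F (size l) l = take (size l).-1 l.
Proof.
move=> Hi.
apply: (@eq_from_nth _ 1%g); rewrite /F; first by crush2.
rewrite !size_mkseq => k /= Hk; crush2; fin.
Qed.

Lemma ins_eq j s : (j <= size s)%N -> ins j s = take j s ++ t :: map cj (drop j s).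
Proof.
move=> Hj.
have sdrop : size (drop j s) = (size s - j)%N by rewrite size_drop.
apply: (@eq_from_nth _ 1%g); rewrite /ins; first by crush2.
rewrite !size_mkseq => k /= Hk; crush2; fin.
all: rewrite (nth_map 1%g); [rewrite nth_drop; congr (cj (nth _ _ _)); lia | rewrite sdrop; lia].

Qed.
End Tuples.

Lemma comb (x y : nat -> nat -> int) N :
 (forall i j, (i < j)%N -> (j <= N)%N -> x i j = y i j.-1) ->
 (forall i j, (j.+2 <= i)%N -> (i <= N.+1)%N -> x i j = y i.-1 j) ->
 (forall j, (j < N)%N -> x j.+1 j = x j.+1 j.+1) ->
 forall n, (n <= N)%N ->
 \sum_(j < n.+1) (-1)^+j * \sum_(i < n.+2) (-1)^+i * x i j +
 \sum_(i < n.+1) (-1)^+i * \sum_(j < n) (-1)^+j * y i j = x 0%N 0%N - x n.+1 n.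
Proof.
move=> R1 R2 R3; elim=> [_|n IH Hn].
  rewrite !big_ord_recr !big_ord0 /=.
  ring.
pose A := \sum_(j < n.+1) (-1)^+j * \sum_(i < n.+2) (-1)^+i * x i j.
pose B := \sum_(i < n.+1) (-1)^+i * \sum_(j < n) (-1)^+j * y i j.
have {IH} IH := IH (ltnW Hn).
pose P := \sum_(j < n.+1) (-1)^+j * y n.+1 j.
pose Q := \sum_(i < n.+1) (-1)^+i * y i n.
have eA : \sum_(j < n.+2) (-1)^+j * \sum_(i < n.+3) (-1)^+i * x i j =
   A + (-1)^+(n.+2) * P + (-1)^+(n.+1) * (Q + (-1)^+(n.+1) * x n.+1 n.+1
        + (-1)^+(n.+2) * x n.+2 n.+1).
  rewrite big_ord_recr /=; congr (_ + _).
    rewrite /A /P mulr_sumr -big_split /=; apply: eq_bigr => j _.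
    rewrite big_ord_recr /= mulrDr; congr (_ + _).
    have := ltn_ord j => Hj.
    rewrite (R2 n.+2 j); [by rewrite mulrCA | lia | lia].
  rewrite big_ord_recr big_ord_recr /= /Q; congr (_ * (_ + _ + _)).
  by apply: eq_bigr => i _; have := ltn_ord i => Hi; rewrite (R1 i n.+1) //=; lia.
have eB : \sum_(i < n.+2) (-1)^+i * \sum_(j < n.+1) (-1)^+j * y i j =
   B + (-1)^+n * Q + (-1)^+(n.+1) * P.
  rewrite big_ord_recr /=; congr (_ + _).
  rewrite /B /Q mulr_sumr -big_split /=; apply: eq_bigr => i _.
  by rewrite big_ord_recr /= mulrDr mulrCA.
rewrite eA eB -(R3 n Hn).
move: IH; rewrite -/A -/B => IH.
have E0 : x 0%N 0%N = A + B + x n.+1 n by rewrite IH; ring.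
rewrite E0 !exprS.
have he : (-1 : int)^+n * (-1)^+n = 1 by rewrite -expr2 sqrr_sign.
move: (A) (B) (P) (Q) (x n.+1 n) (x n.+2 n.+1) => a b p q u v.
set e := (-1)^+n in he *.
transitivity (a + b + e * e * (u - v)); first ring.
by rewrite he mul1r addrA.
Qed.

Section Main.
Variable G : groupType.
Variable t : G.

Definition hh (s : seq G) : chain G :=
  [seq ((-1)^+j, ins t j s) | j <- iota 0 (size s).+1].

Lemma sum_iota (f : nat -> int) n : \sum_(i <- iota 0 n) f i = \sum_(i < n) f i.
Proof. by rewrite -(big_mkord xpredT) /index_iota subn0. Qed.

Lemma W_hh s Phi : W (hh s) Phi = \sum_(j < (size s).+1) (-1)^+j * Phi (ins t j s).
Proof. by rewrite /W big_map sum_iota. Qed.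

Lemma bar_bdE (c : chain G) : bar_bd c = lin (@bar_bd_tuple G) c.
Proof. by []. Qed.
Lemma cross_tE (c : chain G) : cross_t t c = lin (cross_t_tuple t) c.
Proof. by []. Qed.

Lemma W_bdt (s : seq G) Phi : (0 < size s)%N ->
  W (bar_bd_tuple s) Phi = \sum_(i < (size s).+1) (-1)^+i * Phi (F i s).
Proof.
case: s => [//|g l] _ /=.
rewrite W_cons W_cat W_cons W_nil addr0 big_ord_recl big_ord_recr.
rewrite F0 expr0 !mul1r; congr (_ + _); congr (_ + _).
  rewrite /W big_map sum_iota; apply: eq_bigr => i _.
  rewrite !lift0 /= FS ?ltnS ?ltn_ord //.
rewrite lift0 /= -[(size l).+1]/(size (g :: l)) (Flast (l := g :: l)) //.
Qed.

Lemma W_cross (s : seq G) Phi : (forall h, h \in s -> cj t h = h) ->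
  W (cross_t_tuple t s) Phi = (-1)^+(size s) * W (hh s) Phi.
Proof.
move=> Hs; rewrite W_hh /cross_t_tuple /W big_map sum_iota mulr_sumr.
apply: eq_bigr => j _ /=.
have Hj : (j <= size s)%N by rewrite -ltnS ltn_ord.
rewrite ins_eq // map_id_in; last by move=> x /mem_drop /Hs.
have E : (-1 : int)^+(size s) = (-1)^+(size s - j) * (-1)^+j by rewrite -exprD subnK.
by rewrite E -mulrA; congr (_ * _); rewrite mulrA -expr2 sqrr_sign mul1r.
Qed.


Lemma W_bdt_ins j (s : seq G) Phi : W (bar_bd_tuple (ins t j s)) Phi =
  \sum_(i < (size s).+2) (-1)^+i * Phi (F i (ins t j s)).
Proof. by rewrite W_bdt size_ins. Qed.

Lemma W_hh_F i (s : seq G) Phi : W (hh (F i s)) Phi =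
  \sum_(j < (size s).-1.+1) (-1)^+j * Phi (ins t j (F i s)).
Proof. by rewrite W_hh size_F. Qed.

Lemma W_single (m : seq G) Phi : W [:: (1, m)] Phi = Phi m.
Proof. by rewrite W_cons W_nil mul1r addr0. Qed.

Lemma homotopy (tau sg : seq G) k : size tau = k -> (0 < k)%N ->
  (-1 * (-1)^+k) * W (bar_bd_tuple tau) (fun s => (-1)^+(k.-1) * W (hh s) (dl sg))
    + dl sg tau
  = -1 * W (hh tau) (fun s => W (bar_bd_tuple s) (dl sg))
    + W [:: (1, map (cj t) tau)] (dl sg).
Proof.
move=> Hs Hk.
rewrite W_bdt ?Hs // W_hh W_single.
under eq_bigr => i _ do rewrite W_hh_F.
under [X in _ = -1 * X + _]eq_bigr => j _ do rewrite W_bdt_ins.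
pose x i j := dl sg (F i (ins t j tau)).
pose y i j := dl sg (ins t j (F i tau)).
have C := @comb x y k.
have C2 : \sum_(j < k.+1) (-1)^+j * \sum_(i < k.+2) (-1)^+i * dl sg (F i (ins t j tau)) +
  \sum_(i < k.+1) (-1)^+i * \sum_(j < k) (-1)^+j * dl sg (ins t j (F i tau)) =
  dl sg (F 0 (ins t 0 tau)) - dl sg (F k.+1 (ins t k tau)).
  apply: C => //.
  - by move=> i j Hij Hj; rewrite /x /y R1 // Hs.
  - by move=> i j Hij Hj; rewrite /x /y R2 // Hs.
  - by move=> j Hj; rewrite /x R3 // Hs.
have E4 : F k.+1 (ins t k tau) = tau by rewrite -Hs R4b.
rewrite R4a E4 in C2.
rewrite Hs prednK //.
under eq_bigr do rewrite mulrCA.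
rewrite -mulr_sumr.
move: C2.
set X := \sum_(j < k.+1) _.
set Y := \sum_(i < k.+1) _.
move=> C2.
have ek : (-1:int)^+k = -1 * (-1)^+(k.-1) by rewrite -exprS prednK.
have e2 : (-1:int)^+k.-1 * (-1)^+k.-1 = 1 by rewrite -expr2 sqrr_sign.
rewrite ek.
set e := (-1)^+k.-1 in e2 *.
have -> : Y = dl sg [seq cj t i | i <- tau] - dl sg tau - X by rewrite -C2; ring.
transitivity (e * e * (dl sg [seq cj t i | i <- tau] - dl sg tau - X) + dl sg tau); first ring.
rewrite e2 mul1r; ring.
Qed.

End Main.

Unset Implicit Arguments.

Theorem lemma2p5 (G : groupType) (H G1 G2 : {pred G}) :
  group_closed H -> group_closed G1 -> group_closed G2 ->
  {subset H <= G1} -> {subset H <= G2} ->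
  forall t : G,
  (forall x : G, x \in G2 <-> exists2 g, g \in G1 & x = (g ^ t)%g) ->
  (forall h : G, h \in H -> (h ^ t)%g = h) ->
  forall k : nat, (1 <= k)%N ->
  forall z : chain G, rel_cycle G1 H k z ->
    rel_homologous (@predT G) G2 k z
      (cscale ((-1) ^+ k) (cross_t t (connecting z))).
Proof.
move=> _ _ _ sHG1 sHG2 t HG2 Ht k Hk z [Zdeg ZG1 ZH].
have degbz : forall tau, coef (bar_bd z) tau != 0 -> size tau = k.-1.
  move=> tau Hc; apply/eqP; move: Hc; apply: contraNT => Hs; apply/eqP.
  rewrite coefW bar_bdE W_lin W_zero // => s Hcs.
  rewrite W_bdt ?Zdeg // big1 // => i _; rewrite /dl; case: eqP => [E|]; last by rewrite mulr0.
  by move: Hs; rewrite -E size_F Zdeg // eqxx.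
exists (cscale (-1) (lin (hh t) z)), (lin (fun s => [:: (1, map (cj t) s)]) z).
split.
- move=> sg Hc; apply/eqP; move: Hc; apply: contraNT => Hs; apply/eqP.
  rewrite coefW W_scale W_lin W_zero ?mulr0 // => s Hcs.
  rewrite W_hh big1 // => j _; rewrite /dl; case: eqP => [E|]; last by rewrite mulr0.
  move: Hs; rewrite -E size_ins => /eqP Hs; exfalso; apply: Hs; by rewrite (Zdeg s Hcs).
- by move=> sg _; apply/allP.
- move=> sg Hc; apply/eqP; move: Hc; apply: contraNT => Hs; apply/eqP.
  rewrite coefW W_lin W_zero // => s Hcs.
  rewrite W_single /dl; case: eqP => // E.
  move: Hs; rewrite -E size_map => /eqP Hs; exfalso; apply: Hs; by rewrite (Zdeg s Hcs).
- move=> sg Hc; move: Hc; apply: contraNT => Hs; apply/eqP.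
  rewrite coefW W_lin W_zero // => s Hcs.
  rewrite W_single /dl; case: eqP => // E.
  case/negP: Hs; rewrite -E; apply/allP => y /mapP [x xin ->].
  apply/HG2; exists x => //.
  exact: (allP (ZG1 s Hcs)) x xin.
move=> sg.
rewrite /csub /cadd !coefW !W_cat !W_scale cross_tE W_lin.
rewrite (W_supp (c := connecting z) (Phi2 := fun s => (-1)^+(k.-1) * W (hh t s) (dl sg))); last first.
  move=> s Hcs; rewrite W_cross ?(degbz s Hcs) // => h hin.
  exact: Ht (allP (ZH s Hcs) h hin).
rewrite /connecting !bar_bdE !W_lin W_scale W_lin.
rewrite mulrA addrC -!W_linear.
apply: W_supp => tau Htau /=.
exact: homotopy (Zdeg tau Htau) Hk.
Qed.
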